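(* Let $c=(c_k)_{k\ge1}$ be a sequence of complex numbers. Then $$\|T_c\|\le \sup_{k\ge1}|c_k|+2\sup_{k\ge2}k|c_k-c_{k-1}|,$$ and $$\|T_c\|\ge \sup_{k\ge1}\bigl\{|c_k|^2+(k-1)|c_k-c_{k-1}|^2\bigr\}^{1/2}.$$
   Context: For a complex sequence $c=(c_k)_{k\ge1}$, $T_c$ is the infinite matrix indexed by $j,k\ge1$ with entries $(T_c)_{jk}=c_k$ if $j=k$, $(T_c)_{jk}=c_k-c_{k-1}$ if $j<k$, and $(T_c)_{jk}=0$ if $j>k$. $\|T_c\|$ denotes its operator norm on $\ell^2$ if it acts boundedly, and $\|T_c\|=\infty$ otherwise. *)

(* Defs.v *)
From Stdlib Require Import Reals Arith.
From Coquelicot Require Import Coquelicot.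
Open Scope R_scope.

(* A complex sequence c = (c_k)_{k>=1} is modelled as c : nat -> C; the value
   c 0 is never used (it only appears multiplied by 0 in the lower bound). *)

(* Entries of T_c, indices j,k >= 1. *)
Definition Tentry (c : nat -> C) (j k : nat) : C :=
  if Nat.eqb j k then c k
  else if Nat.ltb j k then Cminus (c k) (c (k - 1)%nat)
  else RtoC 0.

Definition l2n (n : nat) (x : nat -> C) : R :=
  sqrt (sum_n_m (fun j => (Cmod (x j)) ^ 2) 1 n).

Definition Tapply (c : nat -> C) (n : nat) (x : nat -> C) (j : nat) : C :=
  sum_n_m (fun k => Cmult (Tentry c j k) (x k)) 1 n.

(* Operator norm of T_c on l^2, in [0, +oo]: supremum of ||T_c x|| over finitely
   supported x with ||x|| <= 1.  Since T_c is upper triangular, T_c x is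
   supported on 1..n when x is.  Equals +oo iff T_c does not act boundedly. *)
Definition opnorm (c : nat -> C) : Rbar :=
  Lub_Rbar (fun r => exists (n : nat) (x : nat -> C),
                l2n n x <= 1 /\ r = l2n n (Tapply c n x)).

Definition sup_abs (c : nat -> C) : Rbar :=
  Lub_Rbar (fun r => exists k : nat, (1 <= k)%nat /\ r = Cmod (c k)).

Definition sup_kdiff (c : nat -> C) : Rbar :=
  Lub_Rbar (fun r => exists k : nat, (2 <= k)%nat /\
               r = INR k * Cmod (Cminus (c k) (c (k - 1)%nat))).

Definition lower_sup (c : nat -> C) : Rbar :=
  Lub_Rbar (fun r => exists k : nat, (1 <= k)%nat /\
               r = sqrt ((Cmod (c k)) ^ 2 +
                         INR (k - 1) * (Cmod (Cminus (c k) (c (k - 1)%nat))) ^ 2)).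

(* Main.v *)
Require Import Defs.
From Stdlib Require Import Reals Arith.
From Coquelicot Require Import Coquelicot.
From Stdlib Require Import Lia Lra Psatz.
Open Scope R_scope.

Lemma sumR_plus (f g : nat -> R) n m :
  sum_n_m (fun k => f k + g k) n m = sum_n_m f n m + sum_n_m g n m.
Proof. exact (sum_n_m_plus (G:=R_AbelianMonoid) f g n m). Qed.

Lemma sumR_scal (r : R) (f : nat -> R) n m :
  sum_n_m (fun k => r * f k) n m = r * sum_n_m f n m.
Proof. exact (sum_n_m_mult_l (K:=R_Ring) r f n m). Qed.

Lemma sumR_le_loc (f g : nat -> R) n m :
  (forall k, (n <= k <= m)%nat -> f k <= g k) -> sum_n_m f n m <= sum_n_m g n m.
Proof.
  induction m as [|m IH]; intros H.
  - destruct n.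
    + rewrite !sum_n_n. apply H; lia.
    + rewrite !sum_n_m_zero; try lia. apply Rle_refl.
  - destruct (le_lt_dec n (S m)) as [h|h].
    + rewrite !sum_n_Sm; try lia. unfold plus; simpl.
      apply Rplus_le_compat. apply IH; intros; apply H; lia. apply H; lia.
    + rewrite !sum_n_m_zero; try lia. apply Rle_refl.
Qed.

Lemma sumR_ge0 (f : nat -> R) n m :
  (forall k, (n <= k <= m)%nat -> 0 <= f k) -> 0 <= sum_n_m f n m.
Proof.
  intros H. replace 0 with (sum_n_m (fun _ => 0) n m).
  apply sumR_le_loc; auto.
  exact (sum_n_m_const_zero (G:=R_AbelianMonoid) n m).
Qed.

Lemma cs_step P U V a b : P^2 <= U*V -> 0 <= U -> 0 <= V ->
  (P + a*b)^2 <= (U + a^2) * (V + b^2).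
Proof.
  intros H U0 V0.
  assert (Hy : 0 <= a^2*V + b^2*U) by (pose proof (pow2_ge_0 a); pose proof (pow2_ge_0 b); nra).
  assert (Hs : (2*a*b*P)^2 <= (a^2*V + b^2*U)^2).
  { assert (0 <= (a^2*V - b^2*U)^2) by apply pow2_ge_0.
    assert (0 <= a^2*b^2*(U*V - P^2)) by (apply Rmult_le_pos; [replace (a^2*b^2) with ((a*b)^2) by ring; apply pow2_ge_0 | lra]).
    replace ((a ^ 2 * V + b ^ 2 * U) ^ 2) with ((a^2*V - b^2*U)^2 + 4 * (a^2*b^2*(U*V - P^2)) + (2*a*b*P)^2) by ring.
    lra. }
  assert (2*a*b*P <= a^2*V + b^2*U) by nra.
  replace ((P + a*b)^2) with (P^2 + 2*a*b*P + a^2*b^2) by ring.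
  replace ((U + a ^ 2) * (V + b ^ 2)) with (U*V + (a^2*V + b^2*U) + a^2*b^2) by ring.
  lra.
Qed.

Lemma cauchy_schwarz (u v : nat -> R) n m :
  (sum_n_m (fun k => u k * v k) n m)^2 <=
  sum_n_m (fun k => (u k)^2) n m * sum_n_m (fun k => (v k)^2) n m.
Proof.
  induction m as [|m IH].
  - destruct n.
    + rewrite !sum_n_n. nra.
    + rewrite !sum_n_m_zero; try lia. unfold zero; simpl. nra.
  - destruct (le_lt_dec n (S m)) as [h|h].
    + rewrite !sum_n_Sm; try lia. unfold plus; simpl.
      apply cs_step; auto; apply sumR_ge0; intros; nra.
    + rewrite !sum_n_m_zero; try lia. unfold zero; simpl. nra.
Qed.

Lemma indicator_sum {G : AbelianMonoid} (v : G) j n m :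
  (n <= j <= m)%nat ->
  sum_n_m (fun k => if Nat.eqb j k then v else zero) n m = v.
Proof.
  induction m as [|m IH]; intros H.
  - assert (j = 0 /\ n = 0)%nat as [-> ->] by lia. rewrite sum_n_n. reflexivity.
  - rewrite sum_n_Sm; try lia.
    destruct (Nat.eq_dec j (S m)) as [->|hne].
    + rewrite Nat.eqb_refl.
      rewrite (sum_n_m_ext_loc _ (fun _ => zero)).
      * rewrite sum_n_m_const_zero. apply plus_zero_l.
      * intros k hk. destruct (Nat.eqb_spec (S m) k); [lia|auto].
    + rewrite IH; try lia. destruct (Nat.eqb_spec j (S m)); [lia|]. apply plus_zero_r.
Qed.

Section Hardy.
Variable a : nat -> R.
Hypothesis Ha : forall k, 0 <= a k.
Variable n : nat.
Let T (m : nat) := sum_n_m (fun k => a k / INR k) m n.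

Lemma hardy_aux d : forall m, (m + d = S n)%nat -> (1 <= m)%nat ->
  sum_n_m (fun j => T j ^ 2) m n + (INR m - 1) * T m ^ 2 <=
  2 * sum_n_m (fun j => a j * T j) m n.
Proof.
  induction d as [|d IH]; intros m Hm H1.
  - assert (m = S n) by lia. subst m.
    unfold T. rewrite !sum_n_m_zero; try lia. unfold zero; simpl. lra.
  - assert (Hl : (m <= n)%nat) by lia.
    specialize (IH (S m) ltac:(lia) ltac:(lia)).
    rewrite (sum_Sn_m _ m n Hl). rewrite (sum_Sn_m (fun j => a j * T j) m n Hl).
    unfold plus; simpl.
    assert (HT : T m = a m / INR m + T (S m)).
    { unfold T at 1. rewrite (sum_Sn_m _ m n Hl). reflexivity. }
    rewrite S_INR in IH.
    assert (Hpos : 0 < INR m) by (apply lt_0_INR; lia).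
    set (b := a m / INR m) in *. set (s := T (S m)) in *.
    assert (Hab : a m = INR m * b) by (unfold b; field; lra).
    rewrite HT, Hab.
    assert (0 <= INR m * b^2) by (apply Rmult_le_pos; [lra|apply pow2_ge_0]).
    assert (K : INR m*(b+s)^2 - INR m * s^2 <= 2*(INR m*b*(b+s))).
    { replace (2*(INR m*b*(b+s))) with (INR m*(b+s)^2 - INR m * s^2 + INR m * b^2) by ring. lra. }
    replace ((INR m + 1 - 1) * s ^ 2) with (INR m * s^2) in IH by ring.
    simpl in IH, K |- *. lra.
Qed.

Lemma hardy_sum :
  sum_n_m (fun j => T j ^ 2) 1 n <= 2 * sum_n_m (fun j => a j * T j) 1 n.
Proof.
  pose proof (hardy_aux n 1 eq_refl (le_n 1)) as H. change (INR 1) with 1 in H.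
  replace ((1 - 1) * T 1 ^ 2) with 0 in H by ring. rewrite Rplus_0_r in H. exact H.
Qed.

Lemma hardy :
  sum_n_m (fun j => T j ^ 2) 1 n <= 4 * sum_n_m (fun j => a j ^ 2) 1 n.
Proof.
  pose proof hardy_sum as H.
  pose proof (cauchy_schwarz a T 1 n) as C.
  set (Q := sum_n_m (fun j => T j ^ 2) 1 n) in *.
  set (P := sum_n_m (fun j => a j * T j) 1 n) in *.
  set (X := sum_n_m (fun j => a j ^ 2) 1 n) in *.
  assert (0 <= Q) by (apply sumR_ge0; intros; apply pow2_ge_0).
  assert (0 <= X) by (apply sumR_ge0; intros; apply pow2_ge_0).
  destruct (Req_dec Q 0) as [->|hq]. lra.
  assert (Q^2 <= 4 * X * Q) by nra.
  nra.
Qed.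
End Hardy.

Lemma Cmod_sum (f : nat -> C) n m :
  Cmod (sum_n_m f n m) <= sum_n_m (fun k => Cmod (f k)) n m.
Proof. exact (norm_sum_n_m (V:=C_NormedModule) f n m). Qed.

Lemma upper_core c A M n x (HA : 0 <= A) (HM : 0 <= M)
  (hc : forall k, (1 <= k)%nat -> Cmod (c k) <= A)
  (hd : forall k, (2 <= k)%nat -> INR k * Cmod (Cminus (c k) (c (k - 1)%nat)) <= M) :
  sum_n_m (fun j => Cmod (Tapply c n x j) ^ 2) 1 n <=
  (A + 2 * M) ^ 2 * sum_n_m (fun j => Cmod (x j) ^ 2) 1 n.
Proof.
  set (u := fun j => Cmod (x j)).
  set (a := fun k => M * u k).
  assert (Ha : forall k, 0 <= a k) by (intros; unfold a, u; apply Rmult_le_pos; [lra|apply Cmod_ge_0]).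
  set (T := fun j => sum_n_m (fun k => a k / INR k) j n).
  assert (HTn : forall j, 0 <= T j).
  { intros j. apply sumR_ge0. intros k hk. unfold Rdiv.
    destruct k. { simpl. rewrite Rinv_0. lra. }
    apply Rmult_le_pos; auto. left; apply Rinv_0_lt_compat, lt_0_INR; lia. }
  assert (Step1 : forall j, (1 <= j <= n)%nat -> Cmod (Tapply c n x j) <= A * u j + T j).
  { intros j hj. unfold Tapply.
    eapply Rle_trans; [apply Cmod_sum|].
    set (e := fun k => if Nat.eqb j k then A * u j else 0).
    set (g := fun k => if Nat.leb j k then a k / INR k else 0).
    apply Rle_trans with (sum_n_m (fun k => e k + g k) 1 n).
    - apply sumR_le_loc. intros k hk. rewrite Cmod_mult.
      assert (hg : 0 <= g k).
      { unfold g. destruct (Nat.leb j k); [|lra]. unfold Rdiv.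
        apply Rmult_le_pos; auto. left; apply Rinv_0_lt_compat, lt_0_INR; lia. }
      unfold Tentry, e.
      destruct (Nat.eqb_spec j k) as [<-|hne].
      + assert (Cmod (c j) * Cmod (x j) <= A * u j) by
          (unfold u; apply Rmult_le_compat_r; [apply Cmod_ge_0|apply hc; lia]).
        lra.
      + destruct (Nat.ltb_spec j k) as [hlt|hge].
        * unfold g. destruct (Nat.leb_spec j k); [|lia].
          assert (hk2 := hd k ltac:(lia)).
          assert (Hk : 0 < INR k) by (apply lt_0_INR; lia).
          unfold a, u. apply Rmult_le_reg_l with (INR k); auto.
          replace (INR k * (0 + M * Cmod (x k) / INR k)) with (M * Cmod (x k)) by (field; lra).
          rewrite <- Rmult_assoc. apply Rmult_le_compat_r; [apply Cmod_ge_0|exact hk2].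
        * rewrite Cmod_0. lra.
    - rewrite sumR_plus. apply Rplus_le_compat.
      + unfold e. right. exact (indicator_sum (G:=R_AbelianMonoid) (A * u j) j 1 n hj).
      + rewrite (sum_n_m_Chasles g 1 (j - 1) n); try lia.
        replace (S (j - 1)) with j by lia.
        rewrite (sum_n_m_ext_loc g (fun _ => zero) 1 (j - 1)).
        2:{ intros k hk. unfold g. destruct (Nat.leb_spec j k); [lia|reflexivity]. }
        rewrite sum_n_m_const_zero. rewrite plus_zero_l.
        rewrite (sum_n_m_ext_loc g (fun k => a k / INR k) j n).
        2:{ intros k hk. unfold g. destruct (Nat.leb_spec j k); [reflexivity|lia]. }
        unfold T; lra. }
  set (X := sum_n_m (fun j => Cmod (x j) ^ 2) 1 n).
  set (P := sum_n_m (fun j => u j * T j) 1 n).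
  set (Q := sum_n_m (fun j => T j ^ 2) 1 n).
  assert (HX : 0 <= X) by (apply sumR_ge0; intros; apply pow2_ge_0).
  assert (HP : 0 <= P) by (apply sumR_ge0; intros; apply Rmult_le_pos; [apply Cmod_ge_0|auto]).
  assert (HQ : Q <= 4 * (M^2 * X)).
  { unfold Q, T. eapply Rle_trans; [apply (hardy a n)|].
    right. f_equal. unfold X. rewrite <- sumR_scal. apply sum_n_m_ext. intros k. unfold a, u. apply Rpow_mult_distr. }
  assert (HCS : P^2 <= X * Q) by apply (cauchy_schwarz u T 1 n).
  assert (HP2 : P <= 2 * M * X).
  { assert (P^2 <= (2*M*X)^2) by nra.
    assert (0 <= 2*M*X) by nra. nra. }
  apply Rle_trans with (sum_n_m (fun j => A^2 * (Cmod (x j) ^ 2) + (2 * A * (u j * T j) + T j ^ 2)) 1 n).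
  - apply sumR_le_loc. intros j hj.
    assert (h1 := Step1 j hj).
    assert (h0 : 0 <= Cmod (Tapply c n x j)) by apply Cmod_ge_0.
    apply Rle_trans with ((A * u j + T j)^2).
    + apply pow_incr. lra.
    + right. unfold u. ring.
  - rewrite !sumR_plus, !sumR_scal. fold X P Q.
    assert (A * P <= A * (2 * M * X)) by (apply Rmult_le_compat_l; lra).
    nra.
Qed.

Lemma lub_cases (E : R -> Prop) r0 (H : E r0) :
  (exists A, Lub_Rbar E = Finite A /\ forall r, E r -> r <= A) \/ Lub_Rbar E = p_infty.
Proof.
  destruct (Lub_Rbar_correct E) as [ub _]. unfold is_ub_Rbar in ub.
  destruct (Lub_Rbar E) eqn:Hl.
  - left. exists r. split; [reflexivity|]. intros r1 Hr1. exact (ub r1 Hr1).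
  - right; auto.
  - exfalso. exact (ub r0 H).
Qed.

Lemma two_pinfty : Rbar_mult (Finite 2) p_infty = p_infty.
Proof.
  unfold Rbar_mult, Rbar_mult'. destruct (Rle_dec 0 2); [|lra].
  destruct (Rle_lt_or_eq_dec 0 2 r); [reflexivity|lra].
Qed.

Lemma upper_part c :
  Rbar_le (opnorm c) (Rbar_plus (sup_abs c) (Rbar_mult (Finite 2) (sup_kdiff c))).
Proof.
  unfold sup_abs, sup_kdiff.
  destruct (lub_cases (fun r => exists k : nat, (1 <= k)%nat /\ r = Cmod (c k)) (Cmod (c 1%nat)) (ex_intro _ 1%nat (conj (le_n 1) eq_refl)))
    as [[A [EA HA]] | EA]; rewrite EA.
  - destruct (lub_cases (fun r => exists k : nat, (2 <= k)%nat /\ r = INR k * Cmod (Cminus (c k) (c (k - 1)%nat))) (INR 2 * Cmod (Cminus (c 2%nat) (c (2-1)%nat)))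
       (ex_intro _ 2%nat (conj (le_n 2) eq_refl))) as [[M [EM HM]] | EM]; rewrite EM.
    + simpl.
      assert (HA0 : 0 <= A).
      { apply Rle_trans with (Cmod (c 1%nat)); [apply Cmod_ge_0|]. apply HA. exists 1%nat; split; auto. }
      assert (HM0 : 0 <= M).
      { apply Rle_trans with (INR 2 * Cmod (Cminus (c 2%nat) (c (2-1)%nat))).
        apply Rmult_le_pos; [apply pos_INR|apply Cmod_ge_0].
        apply HM. exists 2%nat; split; auto. }
      destruct (Lub_Rbar_correct (fun r => exists (n : nat) (x : nat -> C),
                l2n n x <= 1 /\ r = l2n n (Tapply c n x))) as [_ lub].
      unfold opnorm. apply lub.
      intros r [n [x [Hx ->]]]. simpl.
      assert (hc : forall k, (1 <= k)%nat -> Cmod (c k) <= A)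
        by (intros k hk; apply HA; exists k; auto).
      assert (hd : forall k, (2 <= k)%nat -> INR k * Cmod (Cminus (c k) (c (k - 1)%nat)) <= M)
        by (intros k hk; apply HM; exists k; auto).
      pose proof (upper_core c A M n x HA0 HM0 hc hd) as U.
      unfold l2n in *.
      set (X := sum_n_m (fun j => Cmod (x j) ^ 2) 1 n) in *.
      assert (HX0 : 0 <= X) by (apply sumR_ge0; intros; apply pow2_ge_0).
      assert (HX1 : X <= 1).
      { rewrite <- (sqrt_sqrt X HX0). replace 1 with (1*1) by ring.
        apply Rmult_le_compat; auto using sqrt_pos. }
      replace (A + 2 * M) with (sqrt ((A + 2 * M)^2)).
      2:{ apply sqrt_pow2. lra. }
      apply sqrt_le_1_alt.
      eapply Rle_trans; [exact U|].
      assert (0 <= (A + 2*M)^2) by apply pow2_ge_0.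
      nra.
    + rewrite two_pinfty. simpl. destruct (opnorm c); simpl; auto.
  - destruct (Rbar_mult (Finite 2) _) eqn:E2.
    + simpl. destruct (opnorm c); simpl; auto.
    + simpl. destruct (opnorm c); simpl; auto.
    + exfalso.
      destruct (lub_cases (fun r => exists k : nat, (2 <= k)%nat /\ r = INR k * Cmod (Cminus (c k) (c (k - 1)%nat))) (INR 2 * Cmod (Cminus (c 2%nat) (c (2-1)%nat)))
       (ex_intro _ 2%nat (conj (le_n 2) eq_refl))) as [[M [EM HM]] | EM]; rewrite EM in E2.
      * simpl in E2. discriminate.
      * rewrite two_pinfty in E2. discriminate.
Qed.

Lemma indicator_sumR (v : R) j n m : (n <= j <= m)%nat ->
  sum_n_m (fun k => if Nat.eqb j k then v else 0) n m = v.
Proof. exact (indicator_sum (G:=R_AbelianMonoid) v j n m). Qed.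

Lemma indicator_sumC (v : C) j n m : (n <= j <= m)%nat ->
  sum_n_m (fun k => if Nat.eqb j k then v else RtoC 0) n m = v.
Proof. exact (indicator_sum (G:=C_AbelianMonoid) v j n m). Qed.

Lemma lower_part c : Rbar_le (lower_sup c) (opnorm c).
Proof.
  unfold lower_sup.
  destruct (Lub_Rbar_correct (fun r => exists k : nat, (1 <= k)%nat /\
               r = sqrt ((Cmod (c k)) ^ 2 +
                         INR (k - 1) * (Cmod (Cminus (c k) (c (k - 1)%nat))) ^ 2)))
    as [_ lub].
  apply lub. intros r [k [hk ->]].
  destruct (Lub_Rbar_correct (fun r => exists (n : nat) (x : nat -> C),
                l2n n x <= 1 /\ r = l2n n (Tapply c n x))) as [ub _].
  unfold opnorm. apply ub.
  set (x := fun j => if Nat.eqb j k then RtoC 1 else RtoC 0).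
  exists k, x. split.
  - unfold l2n.
    rewrite (sum_n_m_ext_loc _ (fun j => if Nat.eqb k j then 1 else 0)).
    + rewrite indicator_sumR; [|lia]. rewrite sqrt_1. lra.
    + intros j hj. unfold x. destruct (Nat.eqb_spec j k), (Nat.eqb_spec k j); try lia.
      * rewrite Cmod_1. simpl; ring.
      * rewrite Cmod_0. simpl; ring.
  - unfold l2n. f_equal.
    rewrite (sum_n_m_ext_loc (fun j => Cmod (Tapply c k x j) ^ 2)
               (fun j => Cmod (Tentry c j k) ^ 2)).
    2:{ intros j hj. f_equal. f_equal. unfold Tapply.
        rewrite (sum_n_m_ext_loc _ (fun i => if Nat.eqb k i then Tentry c j k else RtoC 0)).
        - apply indicator_sumC. lia.
        - intros i hi. unfold x. destruct (Nat.eqb_spec i k), (Nat.eqb_spec k i); try lia.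
          + subst. apply Cmult_1_r.
          + apply Cmult_0_r. }
    destruct k as [|k']; [lia|].
    rewrite sum_n_Sm; [|lia].
    rewrite (sum_n_m_ext_loc _ (fun _ => Cmod (Cminus (c (S k')) (c (S k' - 1)%nat)) ^ 2)).
    2:{ intros j hj. unfold Tentry. destruct (Nat.eqb_spec j (S k')); [lia|].
        destruct (Nat.ltb_spec j (S k')); [reflexivity|lia]. }
    rewrite sum_n_m_const. unfold Tentry. rewrite Nat.eqb_refl.
    unfold plus; simpl. ring.
Qed.

Theorem theorem2 (c : nat -> C) :
  Rbar_le (opnorm c) (Rbar_plus (sup_abs c) (Rbar_mult (Finite 2) (sup_kdiff c))) /\
  Rbar_le (lower_sup c) (opnorm c).
Proof. split; [apply upper_part | apply lower_part]. Qed.
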